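(* Let $n\ge 0$ be an integer, $\kappa\in\mathbb{R}$, $T>0$ and $0<|\phi|<1/2$ satisfy $$\coth\big((\tfrac12-\phi)T\big)=\kappa-\coth\big((\tfrac12+\phi)T\big),$$ and set $\tau=(2n+1)T/2$. Define $$\gamma_1=\frac{\coth^2(\tau-(n-\phi)T)-1}{[\kappa-\coth(\tau-(n-\phi)T)]^2-1},\qquad \gamma_2=\frac{\coth^2(\tau-(n+\phi)T)-1}{[\kappa-\coth(\tau-(n+\phi)T)]^2-1}.$$ Then $\gamma_1\gamma_2=1$ and $\beta:=\gamma_1+\gamma_2>2$; moreover $\widehat D_s(\lambda)=\lambda^{2n}(\lambda-\gamma_1)(\lambda-\gamma_2)-(1-\gamma_1)(1-\gamma_2)$ factors as $(\lambda-1)\widehat H_s(\lambda)$ with $$\widehat H_s(\lambda)=\lambda^{2n+1}+(1-\beta)\lambda^{2n}+(2-\beta)\sum_{i=0}^{2n-1}\lambda^i,$$ and $\widehat D_s$ has a real root strictly greater than $1$. *)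

(* Defs.v *)
From Stdlib Require Import Reals.
Open Scope R_scope.

Definition coth (x : R) : R := cosh x / sinh x.

Fixpoint psum (f : nat -> R) (m : nat) : R :=
  match m with
  | O => 0
  | S k => psum f k + f k
  end.

Definition gamma1 (n : nat) (kappa T phi : R) : R :=
  let tau := (2 * INR n + 1) * T / 2 in
  let c := coth (tau - (INR n - phi) * T) in
  (c ^ 2 - 1) / ((kappa - c) ^ 2 - 1).

Definition gamma2 (n : nat) (kappa T phi : R) : R :=
  let tau := (2 * INR n + 1) * T / 2 in
  let c := coth (tau - (INR n + phi) * T) in
  (c ^ 2 - 1) / ((kappa - c) ^ 2 - 1).

Definition Dhat (n : nat) (g1 g2 lam : R) : R :=
  lam ^ (2 * n) * (lam - g1) * (lam - g2) - (1 - g1) * (1 - g2).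

Definition Hhat (n : nat) (beta lam : R) : R :=
  lam ^ (2 * n + 1) + (1 - beta) * lam ^ (2 * n)
  + (2 - beta) * psum (fun i => lam ^ i) (2 * n).

(* Main.v *)
Require Import Defs.
From Stdlib Require Import Reals Lra Lia Psatz.
Open Scope R_scope.

Lemma coth_gt1 x : 0 < x -> coth x > 1.
Proof.
  intros hx. unfold coth, cosh, sinh.
  assert (h1 : exp (-x) < exp x) by (apply exp_increasing; lra).
  assert (h2 : 0 < exp (-x)) by apply exp_pos.
  apply Rlt_gt. apply (Rmult_lt_reg_r ((exp x - exp (-x))/2)). lra.
  field_simplify; lra.
Qed.

Lemma coth_inj x y : 0 < x -> 0 < y -> coth x = coth y -> x = y.
Proof.
  intros hx hy h. unfold coth, cosh, sinh in h.
  assert (h1 : exp (-x) < exp x) by (apply exp_increasing; lra).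
  assert (h1' : exp (-y) < exp y) by (apply exp_increasing; lra).
  assert (e : exp (-x) * exp y = exp x * exp (-y)).
  { apply (Rmult_eq_compat_r ((exp x - exp (-x)) * (exp y - exp (-y)))) in h.
    field_simplify in h; try lra. }
  rewrite <- !exp_plus in e. apply exp_inv in e. lra.
Qed.

Lemma psum_geom lam m : (lam - 1) * psum (fun i => lam ^ i) m = lam ^ m - 1.
Proof.
  induction m as [|m IH]; simpl. ring.
  rewrite Rmult_plus_distr_l, IH. ring.
Qed.

Lemma psum_cont m : continuity (fun lam => psum (fun i => lam ^ i) m).
Proof.
  induction m as [|m IH]; simpl.
  - apply continuity_const. intros a b; reflexivity.
  - apply continuity_plus. exact IH. apply derivable_continuous, derivable_pow.
Qed.

Theorem mainTheorem4 (n : nat) (kappa T phi : R)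
  (hT : 0 < T) (hphi0 : 0 < Rabs phi) (hphi1 : Rabs phi < 1 / 2)
  (hrel : coth ((1 / 2 - phi) * T) = kappa - coth ((1 / 2 + phi) * T)) :
  let g1 := gamma1 n kappa T phi in
  let g2 := gamma2 n kappa T phi in
  let beta := g1 + g2 in
  g1 * g2 = 1 /\ beta > 2 /\
  (forall lam : R, Dhat n g1 g2 lam = (lam - 1) * Hhat n beta lam) /\
  (exists lam : R, lam > 1 /\ Dhat n g1 g2 lam = 0).
Proof.
  intros g1 g2 beta.
  assert (hp : -1/2 < phi < 1/2) by (destruct (Rabs_def2 phi (1/2) hphi1); lra).
  assert (hne : phi <> 0) by (intro e; rewrite e, Rabs_R0 in hphi0; lra).
  set (a := coth ((1 / 2 + phi) * T)) in *.
  set (b := coth ((1 / 2 - phi) * T)) in *.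
  assert (ha : a > 1) by (apply coth_gt1; nra).
  assert (hb : b > 1) by (apply coth_gt1; nra).
  assert (hab : a <> b).
  { intro e. apply coth_inj in e; nra. }
  assert (eg1 : g1 = (a^2-1)/(b^2-1)).
  { unfold g1, gamma1. cbv zeta.
    replace ((2 * INR n + 1) * T / 2 - (INR n - phi) * T) with ((1 / 2 + phi) * T) by field.
    fold a. replace (kappa - a) with b by lra. reflexivity. }
  assert (eg2 : g2 = (b^2-1)/(a^2-1)).
  { unfold g2, gamma2. cbv zeta.
    replace ((2 * INR n + 1) * T / 2 - (INR n + phi) * T) with ((1 / 2 - phi) * T) by field.
    fold b. replace (kappa - b) with a by lra. reflexivity. }
  assert (hA : a^2 - 1 > 0) by nra.
  assert (hB : b^2 - 1 > 0) by nra.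
  assert (hAB : a^2 - 1 <> b^2 - 1) by (intro e; apply hab; nra).
  assert (hprod : g1 * g2 = 1) by (rewrite eg1, eg2; field; lra).
  assert (hbeta : beta > 2).
  { unfold beta. rewrite eg1, eg2.
    assert (e : (a^2-1)/(b^2-1) + (b^2-1)/(a^2-1) - 2
               = ((a^2-1)-(b^2-1))^2 / ((a^2-1)*(b^2-1))) by (field; lra).
    assert (0 < ((a^2-1)-(b^2-1))^2 / ((a^2-1)*(b^2-1))).
    { apply Rdiv_lt_0_compat. assert ((a^2-1)-(b^2-1) <> 0) by lra. nra. nra. }
    lra. }
  assert (hfac : forall lam : R, Dhat n g1 g2 lam = (lam - 1) * Hhat n beta lam).
  { intro lam. unfold Dhat, Hhat.
    rewrite Rmult_plus_distr_l, (Rmult_comm (2 - beta)), <- Rmult_assoc,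
      (Rmult_comm (lam - 1)), Rmult_assoc, psum_geom.
    replace (2 * n + 1)%nat with (S (2 * n)) by lia. simpl.
    unfold beta. replace ((1 - g1) * (1 - g2)) with (1 - g1 - g2 + g1 * g2) by ring. replace ((lam - g1) * (lam - g2)) with (lam * lam - (g1 + g2) * lam + g1 * g2) by ring. rewrite hprod. ring. }
  split; [exact hprod|]. split; [exact hbeta|]. split; [exact hfac|].
  assert (H1 : Hhat n beta 1 < 0).
  { pose proof (hfac 1) as _. unfold Hhat. rewrite pow1, pow1.
    assert (e : forall m, psum (fun i => 1 ^ i) m = INR m).
    { induction m as [|m IH]; [reflexivity|]; cbn [psum]. rewrite IH, pow1, S_INR. ring. }
    rewrite e, mult_INR. simpl INR. pose proof (pos_INR n). nra. }
  assert (Hb : 0 < Hhat n beta beta).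
  { assert (d : Dhat n g1 g2 beta = (beta - 1) * Hhat n beta beta) by apply hfac.
    assert (dp : 0 < Dhat n g1 g2 beta).
    { unfold Dhat.
      replace (beta ^ (2 * n) * (beta - g1) * (beta - g2) - (1 - g1) * (1 - g2))
        with (beta ^ (2 * n) * (beta * beta - beta * beta + g1 * g2) + (beta - 1 - g1 * g2))
        by (unfold beta; ring).
      rewrite hprod. assert (0 < beta ^ (2*n)) by (apply pow_lt; lra). nra. }
    rewrite d in dp. nra. }
  assert (hc : continuity (Hhat n beta)).
  { unfold Hhat. apply continuity_plus. apply continuity_plus.
    apply derivable_continuous, derivable_pow.
    apply continuity_scal. apply derivable_continuous, derivable_pow.
    apply continuity_scal. apply psum_cont. }
  destruct (IVT (Hhat n beta) 1 beta hc ltac:(lra) H1 Hb) as [z [hz1 hz2]].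
  exists z. assert (z <> 1) by (intro e; rewrite e in hz2; lra).
  split; [lra|]. rewrite hfac, hz2. ring.
Qed.
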